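(* Let $\{\mathbf Z_i(n), i\in\mathbb N\}$ be a critical GWBP/$\infty$ with mean matrix $\mathbf M\in\mathcal M_1$ and $\mathbf F(\mathbf s)\neq\mathbf M\mathbf s$. For $i\in\mathbb N$ and $\mathbf s\in\mathbf S$ define $\epsilon_{2,i}(\mathbf 1-\mathbf s)$ by $$\sum_{j\in\mathbb N}M_{ij}(1-s_j)-\sum_{j\in\mathbb N}Q_{ij}(s_j)=M_i\,\epsilon_{2,i}(\mathbf 1-\mathbf s).$$ Then $$\lim_{\mathbf s\in\mathbf S,\ \|\mathbf 1-\mathbf s\|_\infty\to0}\ \sup_{i\in\mathbb N}\frac{|\epsilon_{2,i}(\mathbf 1-\mathbf s)|}{\|\mathbf 1-\mathbf s\|_\infty}=0.$$ Moreover, with $\epsilon_{2,i}(\mathbf Q(n-1;\mathbf s))$ defined by $$\sum_{j\in\mathbb N}M_{ij}Q_j(n-1;\mathbf s)-\sum_{j\in\mathbb N}Q_{ij}\big(F_j(n-1;\mathbf s)\big)=M_i\,\epsilon_{2,i}(\mathbf Q(n-1;\mathbf s)),$$ one has $$\lim_{n\to\infty}\sup_{\mathbf s\in\mathbf S,\ i\in\mathbb N}\frac{|\epsilon_{2,i}(\mathbf Q(n-1;\mathbf s))|}{\mathcal Q(n-1;\mathbf s)}=0.$$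
   Context: A GWBP/$\infty$ has types $\mathbb N=\{1,2,\dots\}$. Each particle lives one unit of time; a type-$i$ particle produces, independently of everything else, a random vector $\mathbf Z_i=(Z_{ij})_{j\in\mathbb N}$ of children, with $Z_i:=\sum_jZ_{ij}<\infty$ a.s. $\mathbf Z_i(n)=(Z_{ij}(n))_j$ is the generation-$n$ population from one type-$i$ particle. For $\mathbf s\in[0,1]^{\mathbb N}$: $F_i(n;\mathbf s)=\mathbb E\prod_js_j^{Z_{ij}(n)}$, $F_i(\mathbf s)=F_i(1;\mathbf s)$, $Q_i(n;\mathbf s)=1-F_i(n;\mathbf s)$, $\mathbf Q(n;\mathbf s)=(Q_i(n;\mathbf s))_i$, $\mathcal Q(n;\mathbf s)=\sup_iQ_i(n;\mathbf s)$, $Q_{ij}(s)=1-\mathbb Es^{Z_{ij}}$ for $s\in[0,1]$, $\|\mathbf 1-\mathbf s\|_\infty=\sup_j(1-s_j)$. $\mathbf S=\{\mathbf s\in[0,1]^{\mathbb N}:\mathbf s\neq\mathbf 1\}$. ''$\mathbf F(\mathbf s)\neq\mathbf M\mathbf s$'' means it is not true that $F_i(\mathbf s)=\sum_jM_{ij}s_j$ for all $i,\mathbf s$. Mean matrix $\mathbf M=(M_{ij})$, $M_{ij}=\mathbb EZ_{ij}$, $M^{(n)}_{ij}=\mathbb EZ_{ij}(n)$, $M_i=\sum_jM_{ij}=\mathbb EZ_i$. Irreducible: for all $i,j$ some $M^{(n)}_{ij}>0$; aperiodic: gcd of such $n$ is 1; then $\lim_n(M^{(n)}_{ij})^{1/n}=1/R$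 for a common $R$; critical: $R=1$. $\mathbf M\in\mathcal M_1$ means: (i) irreducible, aperiodic, $R=1$, 1-recurrent ($\sum_nM^{(n)}_{ij}=\infty$) and 1-positive ($\lim_nM^{(n)}_{ij}>0$ for all $i,j$); then there are positive eigenvectors $\mathbf v\mathbf M=\mathbf v$, $\mathbf M\mathbf u^T=\mathbf u^T$, unique up to positive multiples, normalized with $\sum_jv_ju_j=1$; (ii) $\sum_jv_j=1$ and $\sup_iu_i<\infty$; (iii) $\lim_{N\to\infty}\sup_iM_i^{-1}\sum_{j>N}M_{ij}=0$ and $\lim_{K\to\infty}\sup_iM_i^{-1}\mathbb E[Z_i;Z_i>K]=0$. *)

(* Defs.v *)
From HB Require Import structures.
From mathcomp Require Import all_boot all_order all_algebra.
From mathcomp Require Import all_classical all_reals all_analysis.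
Set Implicit Arguments. Unset Strict Implicit. Unset Printing Implicit Defensive.
Import Order.TTheory GRing.Theory Num.Theory numFieldNormedType.Exports.
Local Open Scope classical_set_scope.
Local Open Scope ring_scope.

(* Types are indexed by nat = {0,1,2,...} (relabelling of {1,2,...}).
   The offspring law of a type-i particle is a probability distribution
   p i on finitely supported count vectors, encoded as  z : seq nat,
   with Z_{ij} = nth 0 z j (types beyond size z have 0 children). *)

Section GW.
Variable R : realType.

Definition offspring_law (p : nat -> seq nat -> R) : Prop :=
  (forall i z, 0 <= p i z) /\
  (forall i, (\esum_(z in [set: seq nat]) (p i z)%:E = 1)%E).

Definition Zcnt (z : seq nat) (j : nat) : nat := nth 0%N z j.

Definition unit_cube (s : nat -> R) : Prop := forall j, 0 <= s j <= 1.
Definition Sset (s : nat -> R) : Prop := unit_cube s /\ exists j, s j != 1.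

Definition pgf (p : nat -> seq nat -> R) (s : nat -> R) (i : nat) : R :=
  fine (\esum_(z in [set: seq nat])
          (p i z * \prod_(j < size z) s j ^+ Zcnt z j)%:E).

(* F_i(n; s): n-th iterate of the generating function (branching property) *)
Fixpoint pgfn (p : nat -> seq nat -> R) (n : nat) (s : nat -> R) : nat -> R :=
  match n with
  | 0 => s
  | n'.+1 => pgf p (pgfn p n' s)
  end.

Definition Qn p n s i : R := 1 - pgfn p n s i.
Definition Qsup p n s : R := sup [set Qn p n s i | i in [set: nat]].

Definition Qij (p : nat -> seq nat -> R) (i j : nat) (x : R) : R :=
  1 - fine (\esum_(z in [set: seq nat]) (p i z * x ^+ Zcnt z j)%:E).

Definition normInf (s : nat -> R) : R := sup [set 1 - s j | j in [set: nat]].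

Definition Mij (p : nat -> seq nat -> R) (i j : nat) : \bar R :=
  \esum_(z in [set: seq nat]) (p i z * (Zcnt z j)%:R)%:E.
Definition Mi (p : nat -> seq nat -> R) (i : nat) : \bar R :=
  \esum_(z in [set: seq nat]) (p i z * (sumn z)%:R)%:E.

Fixpoint Mn (p : nat -> seq nat -> R) (n : nat) (i j : nat) : \bar R :=
  match n with
  | 0 => ((i == j)%:R)%:E
  | n'.+1 => \esum_(k in [set: nat]) (Mn p n' i k * Mij p k j)%E
  end.

Definition pgf_linear (p : nat -> seq nat -> R) : Prop :=
  forall i s, unit_cube s ->
    pgf p s i = fine (\esum_(j in [set: nat]) (Mij p i j * (s j)%:E)%E).

Definition eps2 (p : nat -> seq nat -> R) (s : nat -> R) (i : nat) : R :=
  (fine (\esum_(j in [set: nat]) (Mij p i j * (1 - s j)%:E)%E)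
   - fine (\esum_(j in [set: nat]) (Qij p i j (s j))%:E)) / fine (Mi p i).

Definition irreducible p : Prop :=
  forall i j, exists n, (0 < n)%N /\ (0 < Mn p n i j)%E.
Definition aperiodic p : Prop :=
  forall i (d : nat), (forall n, (0 < n)%N -> (0 < Mn p n i i)%E -> (d %| n)%N) ->
    d = 1%N.
Definition critical p : Prop :=
  forall i j, (fun n : nat => powR (fine (Mn p n i j)) (n%:R)^-1 : R) @ \oo --> (1 : R).
Definition one_recurrent p : Prop :=
  forall i j, (\esum_(n in [set: nat]) Mn p n i j = +oo)%E.
Definition one_positive p : Prop :=
  forall i j, exists l : R, 0 < l /\ Mn p n i j @[n --> \oo] --> l%:E.

Definition classM1 (p : nat -> seq nat -> R) : Prop :=
  (* finite means M_i < oo (implicit in the paper: M_i^{-1}, eps_{2,i}) *)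
  (forall i, Mi p i < +oo)%E /\
  irreducible p /\ aperiodic p /\ critical p /\ one_recurrent p /\ one_positive p /\
  (exists v u : nat -> R,
      (forall j, 0 < v j) /\ (forall i, 0 < u i) /\
      (forall j, \esum_(i in [set: nat]) ((v i)%:E * Mij p i j) = (v j)%:E)%E /\
      (forall i, \esum_(j in [set: nat]) (Mij p i j * (u j)%:E) = (u i)%:E)%E /\
      (\esum_(j in [set: nat]) (v j * u j)%:E = 1)%E /\
      (\esum_(j in [set: nat]) (v j)%:E = 1)%E /\
      (exists B : R, forall i, u i <= B)) /\
  (forall e : R, 0 < e -> exists N0 : nat, forall N, (N0 <= N)%N -> forall i,
      (\esum_(j in [set j | (N < j)%N]) Mij p i j <= e%:E * Mi p i)%E) /\
  (forall e : R, 0 < e -> exists K0 : nat, forall K, (K0 <= K)%N -> forall i,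
      (\esum_(z in [set z | (K < sumn z)%N]) (p i z * (sumn z)%:R)%:E
         <= e%:E * Mi p i)%E).

End GW.

(* Main.v *)
Require Import Defs.
From HB Require Import structures.
From mathcomp Require Import all_boot all_order all_algebra.
From mathcomp Require Import all_classical all_reals all_analysis.
From mathcomp Require Import ring lra.
Import Order.TTheory GRing.Theory Num.Theory.
Local Open Scope classical_set_scope.
Local Open Scope ring_scope.
Set Implicit Arguments. Unset Strict Implicit. Unset Printing Implicit Defensive.

Section Gen.
Variable R : realType.
Local Open Scope ereal_scope.

Lemma esumZl_le (T : choiceType) (D : set T) (b : T -> \bar R) (c : R) :
  (0 <= c)%R -> (forall x, 0 <= b x) ->
   \esum_(x in D) (c%:E * b x) <= c%:E * \esum_(x in D) b x.
Proof.
move=> c0 b0; apply: ge_ereal_sup => _ [X [finX XD] <-].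
rewrite fsbig_finite // -ge0_sume_distrr; last by move=> x _; apply: b0.
apply: lee_wpmul2l; first by rewrite lee_fin.
rewrite -fsbig_finite //; apply: ereal_sup_ubound; by exists X.
Qed.

Lemma esumZl (T : choiceType) (D : set T) (b : T -> \bar R) (c : R) :
  (0 <= c)%R -> (forall x, 0 <= b x) ->
   \esum_(x in D) (c%:E * b x) = c%:E * \esum_(x in D) b x.
Proof.
move=> c0 b0; apply/eqP; rewrite eq_le esumZl_le //=.
have [->|cn0] := eqVneq c 0%R.
  by rewrite mul0e esum_ge0 // => x _; rewrite mul0e.
have cp : (0 < c)%R by rewrite lt_def cn0 c0.
rewrite -lee_pdivlMl //.
rewrite (@le_trans _ _ (\esum_(x in D) (c^-1%:E * (c%:E * b x)))) //.
  apply: le_esum => x _; rewrite muleA -EFinM mulVf // mul1e //.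
apply: esumZl_le; first by rewrite invr_ge0.
by move=> x; rewrite mule_ge0 // lee_fin.
Qed.

Lemma esumZr (T : choiceType) (D : set T) (b : T -> \bar R) (c : R) :
  (0 <= c)%R -> (forall x, 0 <= b x) ->
   \esum_(x in D) (b x * c%:E) = (\esum_(x in D) b x) * c%:E.
Proof.
move=> c0 b0; rewrite muleC -esumZl //; apply: eq_esum => x _; exact: muleC.
Qed.

Lemma esum_swap (T1 T2 : choiceType) (f : T1 -> T2 -> \bar R) :
  (forall x y, 0 <= f x y) ->
  \esum_(x in [set: T1]) \esum_(y in [set: T2]) f x y =
  \esum_(y in [set: T2]) \esum_(x in [set: T1]) f x y.
Proof.
move=> f0.
rewrite (esum_esum (I := [set: T1]) (J := fun _ => [set: T2])) //.
rewrite (esum_esum (I := [set: T2]) (J := fun _ => [set: T1])) //.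
rewrite (reindex_esum ([set: T2] `*`` (fun=> [set: T1])) _ (fun x => (x.2, x.1)))//.
split.
- by [].
- by move=> [i1 i2] [j1 j2] /= _ _ [] -> ->.
- by move=> [i1 i2] _ /=; exists (i2, i1).
Qed.

Lemma esum_nat_fin (a : nat -> \bar R) (n : nat) :
  (forall j, 0 <= a j) -> (forall j, (n <= j)%N -> a j = 0) ->
  \esum_(j in [set: nat]) a j = \sum_(j < n) a j.
Proof.
move=> a0 an.
rewrite (esumID `I_n); last by move=> j _; exact: a0.
rewrite [X in _ + X]esum1 ?adde0; last first.
  by move=> j [_ /=]; move/negP; rewrite -leqNgt => /an.
rewrite setTI esum_fset //.
by rewrite -fsbig_ord.
Qed.

Lemma esum_gt0 (T : choiceType) (D : set T) (a : T -> \bar R) :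
  (forall x, 0 <= a x) -> 0 < \esum_(x in D) a x -> exists2 x, D x & 0 < a x.
Proof.
move=> a0 H; apply: contrapT => Hn.
suff E : \esum_(x in D) a x = 0 by rewrite E ltxx in H.
apply: esum1 => x Dx; apply/eqP; rewrite eq_le a0 andbT.
rewrite leNgt; apply/negP => ax; apply: Hn; by exists x.
Qed.

End Gen.

Section RealLemmas.
Variable R : realType.

Definition ek (x : R) (k : nat) := x ^+ k - 1 + k%:R * (1 - x).

Lemma ekS x k : ek x k.+1 = x * ek x k + k%:R * (1 - x) ^+ 2.
Proof. rewrite /ek exprS -natr1; ring. Qed.

Lemma ek0 x : ek x 0 = 0.
Proof. by rewrite /ek expr0 mul0r subrr addr0. Qed.

Lemma ek_ge0 x k : 0 <= x -> x <= 1 -> 0 <= ek x k.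
Proof.
move=> x0 x1; elim: k => [|k IH]; first by rewrite ek0.
rewrite ekS; apply: addr_ge0; first exact: mulr_ge0.
by apply: mulr_ge0 => //; apply: exprn_ge0; lra.
Qed.

Lemma ek_le1 x k : 0 <= x -> x <= 1 -> ek x k <= k%:R * (1 - x).
Proof.
move=> x0 x1; elim: k => [|k IH]; first by rewrite ek0 mul0r.
rewrite ekS -natr1.
have k0 : 0 <= k%:R :> R by [].
nra.
Qed.

Lemma ek_le2 x k : 0 <= x -> x <= 1 -> ek x k <= (k%:R) ^+ 2 * (1 - x) ^+ 2.
Proof.
move=> x0 x1; elim: k => [|k IH]; first by rewrite ek0; apply: mulr_ge0; rewrite sqr_ge0.
rewrite ekS -natr1.
have k0 : 0 <= k%:R :> R by [].
have e0 := ek_ge0 k x0 x1.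
have h : x * ek x k <= ek x k by nra.
have a0 : 0 <= (1 - x) ^+ 2 by rewrite sqr_ge0.
set A := (1 - x) ^+ 2 in IH a0 *.
have : 0 <= (k%:R + 1) * A by apply: mulr_ge0 => //; lra.
rewrite expr2 in IH *. nra.
Qed.

Lemma ek_gt0 x k : 0 <= x -> x < 1 -> (2 <= k)%N -> 0 < ek x k.
Proof.
move=> x0 x1; case: k => [//|]; case => [//|k] _.
rewrite ekS; apply: ltr_pwDr.
  by rewrite mulr_gt0 // ?(ltr0Sn R k) // exprn_gt0 // subr_gt0.
by apply: mulr_ge0 => //; apply: ek_ge0 => //; lra.
Qed.

Lemma pow_diff (x y : R) k : 0 <= x -> x <= y -> y <= 1 ->
  y ^+ k - x ^+ k <= k%:R * (y - x).
Proof.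
move=> x0 xy y1; elim: k => [|k IH]; first by rewrite !expr0 subrr mul0r.
have xk0 : 0 <= x ^+ k by apply: exprn_ge0.
have xk1 : x ^+ k <= 1 by apply: exprn_ile1 => //; lra.
rewrite !exprS -natr1.
have : y ^+ k.+1 - x ^+ k.+1 = y * (y ^+ k - x ^+ k) + x ^+ k * (y - x).
  by rewrite !exprS; ring.
rewrite !exprS => ->.
have d0 : 0 <= y ^+ k - x ^+ k.
  by rewrite subr_ge0; apply: lerXn2r => //; rewrite ?nnegrE //; lra.
nra.
Qed.


Section En.
Variables (k : nat -> nat).

Definition Pn (s : nat -> R) n := \prod_(j < n) s j ^+ k j.
Definition Sn (s : nat -> R) n := \sum_(j < n) (k j)%:R * (1 - s j).
Definition En (s : nat -> R) n := Pn s n - 1 + Sn s n.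

Lemma En_rec s n : En s n.+1 = En s n + (k n)%:R * (1 - s n) * (1 - Pn s n)
   + Pn s n * ek (s n) (k n).
Proof. rewrite /En /Pn /Sn !big_ord_recr /= /ek; ring. Qed.

Lemma Pn_ge0 s n : (forall j, 0 <= s j <= 1) -> 0 <= Pn s n.
Proof. move=> c; apply: prodr_ge0 => j _; apply: exprn_ge0; by case/andP: (c j). Qed.

Lemma Pn_le1 s n : (forall j, 0 <= s j <= 1) -> Pn s n <= 1.
Proof.
move=> c; apply: prodr_ile1 => j _; case/andP: (c j) => h1 h2.
by rewrite exprn_ge0 // exprn_ile1.
Qed.

Lemma Pn_mono s s' n : (forall j, 0 <= s j <= 1) -> (forall j, s j <= s' j) ->
  Pn s n <= Pn s' n.
Proof.
move=> c le; apply: ler_prod => j _; case/andP: (c j) => h1 h2.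
rewrite exprn_ge0 //=; apply: lerXn2r => //; rewrite nnegrE //.
exact: le_trans (le j).
Qed.

Lemma En_ge0 s n : (forall j, 0 <= s j <= 1) -> 0 <= En s n.
Proof.
move=> c; elim: n => [|n IH].
  by rewrite /En /Pn /Sn !big_ord0 subrr addr0.
rewrite En_rec; have P0 := Pn_ge0 n c; have P1 := Pn_le1 n c.
case/andP: (c n) => h1 h2.
have e0 := ek_ge0 (k n) h1 h2.
apply: addr_ge0; last exact: mulr_ge0.
apply: addr_ge0 => //; apply: mulr_ge0; last lra.
apply: mulr_ge0 => //; lra.
Qed.

Lemma En_mono s s' n : (forall j, 0 <= s j <= 1) -> (forall j, 0 <= s' j <= 1) ->
  (forall j, s j <= s' j) -> En s' n <= En s n.
Proof.
move=> c c' le; elim: n => [|n IH].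
  by rewrite /En /Pn /Sn !big_ord0.
have E : forall t, En t n.+1 = Pn t n * t n ^+ k n - 1 + Sn t n + (k n)%:R * (1 - t n).
  by move=> t; rewrite /En /Pn /Sn !big_ord_recr /=; ring.
rewrite !E.
have P0 := Pn_ge0 n c; have P1 := Pn_le1 n c.
have P0' := Pn_ge0 n c'; have P1' := Pn_le1 n c'.
have PP := Pn_mono n c le.
case/andP: (c n) => h1 h2; case/andP: (c' n) => h1' h2'.
have d := pow_diff (k n) h1 (le n) h2'.
have x0 : 0 <= s n ^+ k n by apply: exprn_ge0.
have x1 : s' n ^+ k n <= 1 by apply: exprn_ile1.
have xx : s n ^+ k n <= s' n ^+ k n by apply: lerXn2r => //; rewrite nnegrE //; lra.
move: IH; rewrite /En => IH.
set a := s n ^+ k n in d x0 xx *; set b := s' n ^+ k n in d x1 xx *.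
nra.
Qed.

Lemma En_eq0 s n : (forall j, 0 <= s j < 1) -> En s n = 0 -> (\sum_(j < n) k j <= 1)%N.
Proof.
move=> c.
have c' : forall j, 0 <= s j <= 1 by move=> j; case/andP: (c j) => -> /ltW ->.
elim: n => [|n IH]; first by rewrite big_ord0.
rewrite En_rec => H.
have P0 := Pn_ge0 n c'; have P1 := Pn_le1 n c'.
case/andP: (c n) => h1 h2.
have e0 := ek_ge0 (k n) h1 (ltW h2).
have E0 := En_ge0 n c'.
have t2 : 0 <= (k n)%:R * (1 - s n) * (1 - Pn s n).
  by apply: mulr_ge0; [apply: mulr_ge0 => //; lra | lra].
have t3 : 0 <= Pn s n * ek (s n) (k n) by apply: mulr_ge0.
have En0 : En s n = 0 by lra.
have T2 : (k n)%:R * (1 - s n) * (1 - Pn s n) = 0 by lra.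
have T3 : Pn s n * ek (s n) (k n) = 0 by lra.
rewrite big_ord_recr /=.
case kn : (k n) => [|kn']; first by rewrite addn0; exact: IH.
have Pn1 : Pn s n = 1.
  move: T2; rewrite kn => /eqP; rewrite !mulf_eq0 pnatr_eq0 /= => /orP[/eqP|/eqP]; lra.
have kle : (k n <= 1)%N.
  rewrite leqNgt; apply/negP => k2.
  have := ek_gt0 h1 h2 k2; move: T3; rewrite Pn1 mul1r => ->; by rewrite ltxx.
have S0 : Sn s n = 0 by move: En0; rewrite /En Pn1; lra.
have kj0 : forall j : 'I_n, k j = 0%N.
  move=> j; move: S0; rewrite /Sn => /eqP; rewrite psumr_eq0; last first.
    move=> i _; apply: mulr_ge0 => //; case/andP: (c i) => _ ?; lra.
  move=> /allP /(_ j (mem_index_enum _)) /= /eqP; move/eqP; rewrite mulf_eq0 pnatr_eq0.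
  case/orP => [/eqP //|/eqP H0]; exfalso; case/andP: (c j) => _ ?; lra.
rewrite big1 ?add0n -?kn //.
Qed.

End En.
End RealLemmas.

Section SeqLemmas.
Variable R : realType.

Lemma sumn_nth (z : seq nat) : \sum_(j < size z) nth 0%N z j = sumn z.
Proof.
elim: z => [|a z IH] /=; first by rewrite big_ord0.
by rewrite big_ord_recl /= IH.
Qed.

Lemma nth_le_sumn (z : seq nat) j : (nth 0%N z j <= sumn z)%N.
Proof.
elim: z j => [|a z IH] [|j] //=; first exact: leq_addr.
exact: leq_trans (IH j) (leq_addl _ _).
Qed.

Lemma prod_lin (z : seq nat) (s : nat -> R) : sumn z = 1%N ->
  \prod_(j < size z) s j ^+ nth 0%N z j = \sum_(j < size z) (nth 0%N z j)%:R * s j.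
Proof.
elim: z s => [|a z IH] s //=.
rewrite big_ord_recl big_ord_recl /=.
case: a => [|a] /=.
  rewrite add0n => /(IH (fun j => s j.+1)) H.
  by rewrite expr0 mul1r mul0r add0r H.
case: a => [|a] //; rewrite add1n => -[] H0.
have z0 : forall j, nth 0%N z j = 0%N.
  move=> j; apply/eqP; rewrite -leqn0; have := nth_le_sumn z j; by rewrite H0.
rewrite big1 ?mulr1 ?big1 ?addr0 ?mul1r ?expr1 // => j _; rewrite /bump /= z0.
  by rewrite mul0r.
by rewrite expr0.
Qed.

Lemma prod_le_factor (z : seq nat) (s : nat -> R) (j : nat) :
  (forall j, 0 <= s j <= 1) -> (j < size z)%N -> (1 <= nth 0%N z j)%N ->
  \prod_(i < size z) s i ^+ nth 0%N z i <= s j.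
Proof.
move=> c jz kj.
rewrite (bigD1 (Ordinal jz)) //=.
have P0 : 0 <= \prod_(i < size z | i != Ordinal jz) s i ^+ nth 0%N z i.
  by apply: prodr_ge0 => i _; apply: exprn_ge0; case/andP: (c i).
have P1 : \prod_(i < size z | i != Ordinal jz) s i ^+ nth 0%N z i <= 1.
  apply: prodr_ile1 => i _; case/andP: (c i) => h1 h2.
  by rewrite exprn_ge0 // exprn_ile1.
case/andP: (c j) => h1 h2.
have : s j ^+ nth 0%N z j <= s j.
  case: (nth 0%N z j) kj => [//|m] _.
  rewrite exprS; have : s j ^+ m <= 1 by rewrite exprn_ile1.
  have : 0 <= s j ^+ m by rewrite exprn_ge0.
  nra.
have : 0 <= s j ^+ nth 0%N z j by rewrite exprn_ge0.
nra.
Qed.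

End SeqLemmas.

Section ExSec.
Variable R : realType.
Variable p : nat -> seq nat -> R.
Hypothesis p0 : forall i z, (0 <= p i z)%R.
Hypothesis p1 : forall i, (\esum_(z in [set: seq nat]) (p i z)%:E = 1)%E.

Local Open Scope ereal_scope.

Lemma esum_single (T : choiceType) (a : T -> \bar R) x :
  (forall y, 0 <= a y) -> a x <= \esum_(y in [set: T]) a y.
Proof.
move=> a0; apply: esum_ge; exists [set x]; first by split; [exact: finite_set1|].
by rewrite fsbig_set1.
Qed.

Definition Ex i (f : seq nat -> R) : \bar R :=
  \esum_(z in [set: seq nat]) (p i z * f z)%:E.

Lemma Ex_ge0 i f : (forall z, 0 <= f z)%R -> 0 <= Ex i f.
Proof. by move=> f0; apply: esum_ge0 => z _; rewrite lee_fin mulr_ge0. Qed.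

Lemma Ex_le i f g : (forall z, f z <= g z)%R -> Ex i f <= Ex i g.
Proof. by move=> fg; apply: le_esum => z _; rewrite lee_fin ler_wpM2l. Qed.

Lemma Ex_eq i f g : (forall z, p i z * f z = p i z * g z)%R -> Ex i f = Ex i g.
Proof. by move=> fg; apply: eq_esum => z _; rewrite fg. Qed.

Lemma ExD i f g : (forall z, 0 <= f z)%R -> (forall z, 0 <= g z)%R ->
  Ex i (fun z => f z + g z)%R = Ex i f + Ex i g.
Proof.
move=> f0 g0; rewrite /Ex -esumD; last by move=> z _; rewrite lee_fin mulr_ge0.
  by apply: eq_esum => z _; rewrite mulrDr EFinD.
by move=> z _; rewrite lee_fin mulr_ge0.
Qed.

Lemma ExZ i c f : (0 <= c)%R -> (forall z, 0 <= f z)%R ->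
  Ex i (fun z => c * f z)%R = c%:E * Ex i f.
Proof.
move=> c0 f0; rewrite /Ex -esumZl //; last by move=> z; rewrite lee_fin mulr_ge0.
by apply: eq_esum => z _; rewrite -EFinM mulrCA.
Qed.

Lemma Ex_cst i c : (0 <= c)%R -> Ex i (fun _ => c) = c%:E.
Proof.
move=> c0; rewrite /Ex.
under eq_esum do rewrite EFinM.
by rewrite esumZr // ?p1 ?mul1e // => z; rewrite lee_fin.
Qed.

Lemma Ex_le1 i f : (forall z, 0 <= f z <= 1)%R -> Ex i f <= 1.
Proof.
move=> f01; rewrite -(@Ex_cst i 1%R ler01); apply: Ex_le => z.
by case/andP: (f01 z).
Qed.

Lemma Ex_fin i f : (forall z, 0 <= f z <= 1)%R -> Ex i f = (fine (Ex i f))%:E.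
Proof.
move=> f01; rewrite fineK // ge0_fin_numE.
  by apply: (le_lt_trans (@Ex_le1 i f f01)); rewrite ltry.
by apply: Ex_ge0 => z; case/andP: (f01 z).
Qed.

Lemma Ex_compl i f : (forall z, 0 <= f z <= 1)%R ->
  Ex i (fun z => 1 - f z)%R = (1 - fine (Ex i f))%:E.
Proof.
move=> f01.
have H : Ex i (fun z => f z + (1 - f z))%R = 1.
  rewrite -(@Ex_cst i 1%R ler01); apply: Ex_eq => z; by rewrite addrC subrK.
rewrite ExD in H; last 2 first.
- by move=> z; case/andP: (f01 z).
- by move=> z; case/andP: (f01 z) => _; rewrite subr_ge0.
rewrite (@Ex_fin i f f01) in H.
have : Ex i (fun z => 1 - f z)%R = 1 - (fine (Ex i f))%:E.
  rewrite -H addeAC subee ?add0e //.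
rewrite EFinB => ->; done.
Qed.

Lemma Ex_single i f z : (forall z, 0 <= f z)%R -> (p i z * f z)%:E <= Ex i f.
Proof. move=> f0; rewrite /Ex; apply: (@esum_single _ (fun z => (p i z * f z)%:E) z) => y.
by rewrite lee_fin mulr_ge0. Qed.

Lemma Ex_swap i (f : seq nat -> nat -> R) :
  (forall z j, 0 <= f z j)%R -> (forall z j, (size z <= j)%N -> f z j = 0%R) ->
  \esum_(j in [set: nat]) Ex i (fun z => f z j) =
  Ex i (fun z => \sum_(j < size z) f z j)%R.
Proof.
move=> f0 fz; rewrite /Ex esum_swap; last by move=> j z; rewrite lee_fin mulr_ge0.
apply: eq_esum => z _.
rewrite (esum_nat_fin (n := size z)); first last.
- by move=> j jz; rewrite fz // mulr0.
- by move=> j; rewrite lee_fin mulr_ge0.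
by rewrite sumEFin mulr_sumr.
Qed.

End ExSec.

Section GW1.
Variable R : realType.
Variable p : nat -> seq nat -> R.
Hypothesis p0 : forall i z, (0 <= p i z)%R.
Hypothesis p1 : forall i, (\esum_(z in [set: seq nat]) (p i z)%:E = 1)%E.

Local Open Scope ereal_scope.

Definition prodS (z : seq nat) (s : nat -> R) : R :=
  \prod_(j < size z) s j ^+ Zcnt z j.

Lemma prodS01 z s : unit_cube s -> (0 <= prodS z s <= 1)%R.
Proof.
move=> c; apply/andP; split.
  exact: (@Pn_ge0 R (Zcnt z) s (size z) c).
exact: (@Pn_le1 R (Zcnt z) s (size z) c).
Qed.

Lemma pgf_Ex s i : unit_cube s -> (pgf p s i)%:E = Ex p i (prodS^~ s).
Proof.
move=> c; rewrite /pgf -/(Ex p i (prodS^~ s)).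
by rewrite -Ex_fin // => z; apply: prodS01.
Qed.

Lemma Qij_Ex i j x : (0 <= x <= 1)%R ->
  (Qij p i j x)%:E = Ex p i (fun z => 1 - x ^+ Zcnt z j)%R.
Proof.
move=> /andP[x0 x1]; rewrite Ex_compl // => z.
by rewrite exprn_ge0 // exprn_ile1.
Qed.

Lemma sumM i (a : nat -> R) : (forall j, 0 <= a j)%R ->
  \esum_(j in [set: nat]) (Mij p i j * (a j)%:E) =
  Ex p i (fun z => \sum_(j < size z) (Zcnt z j)%:R * a j)%R.
Proof.
move=> a0.
rewrite -(@Ex_swap R p p0 i (fun z j => ((Zcnt z j)%:R * a j)%R)); first last.
- by move=> z j jz; rewrite /Zcnt nth_default // mul0r.
- by move=> z j; rewrite mulr_ge0.
apply: eq_esum => j _.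
rewrite muleC /Mij -/(Ex p i (fun z => (Zcnt z j)%:R)%R) -(ExZ p0) //.
by apply: Ex_eq => z; rewrite (mulrC (a j)).
Qed.

Lemma sumQ i s : unit_cube s ->
  \esum_(j in [set: nat]) (Qij p i j (s j))%:E =
  Ex p i (fun z => \sum_(j < size z) (1 - s j ^+ Zcnt z j))%R.
Proof.
move=> c.
rewrite -(@Ex_swap R p p0 i (fun z j => (1 - s j ^+ Zcnt z j)%R)); first last.
- by move=> z j jz; rewrite /Zcnt nth_default // expr0 subrr.
- by move=> z j; case/andP: (c j) => h1 h2; rewrite subr_ge0 exprn_ile1.
by apply: eq_esum => j _; rewrite Qij_Ex.
Qed.

Lemma Mi_sum i : Mi p i = \esum_(j in [set: nat]) Mij p i j.
Proof.
rewrite (eq_esum (b := fun j => Mij p i j * 1%:E)); last by move=> j _; rewrite mule1.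
rewrite sumM // /Mi -/(Ex p i (fun z => (sumn z)%:R)).
apply: Ex_eq => z; rewrite -sumn_nth natr_sum; congr (_ * _)%R; apply: eq_bigr => j _; by rewrite mulr1.
Qed.

Lemma Mi_ge0 i : 0 <= Mi p i.
Proof. exact: (Ex_ge0 p0). Qed.

Lemma Ex_tail i (K : nat) :
  Ex p i (fun z => if (K < sumn z)%N then (sumn z)%:R else 0)%R =
  \esum_(z in [set z | (K < sumn z)%N]) (p i z * (sumn z)%:R)%:E.
Proof.
rewrite /Ex [RHS]esum_mkcond; apply: eq_esum => z _.
case: ifP => H; first by rewrite mem_set.
by rewrite memNset ?mulr0 //= H.
Qed.

Lemma phi_bd (s : nat -> R) (dl : R) (K : nat) z :
  (forall j, 0 <= 1 - s j <= dl)%R -> unit_cube s ->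
  (\sum_(j < size z) ek (s j) (Zcnt z j) <=
    dl ^+ 2 * K%:R * (sumn z)%:R + dl * (if (K < sumn z)%N then (sumn z)%:R else 0))%R.
Proof.
move=> ad c.
have dl0 : (0 <= dl)%R by case/andP: (ad 0%N) => h1 h2; apply: le_trans h2.
have t1 : forall j, (ek (s j) (Zcnt z j) <= (Zcnt z j)%:R * dl)%R.
  move=> j; case/andP: (c j) => h1 h2; apply: le_trans (ek_le1 _ h1 h2) _.
  by apply: ler_wpM2l => //; case/andP: (ad j).
have t2 : forall j, (ek (s j) (Zcnt z j) <= (Zcnt z j)%:R * ((sumn z)%:R * dl ^+ 2))%R.
  move=> j; case/andP: (c j) => h1 h2; apply: le_trans (ek_le2 _ h1 h2) _.
  rewrite expr2 -mulrA; apply: ler_wpM2l => //.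
  have kz : ((Zcnt z j)%:R <= (sumn z)%:R :> R)%R by rewrite ler_nat nth_le_sumn.
  case/andP: (ad j) => a0 a1.
  have : ((1 - s j) ^+ 2 <= dl ^+ 2)%R by rewrite ler_sqr // nnegrE.
  have : (0 <= (1 - s j) ^+ 2)%R by rewrite sqr_ge0.
  have : (0 <= (Zcnt z j)%:R :> R)%R by [].
  nra.
case: ifP => Kz.
  apply: le_trans (_ : (dl * (sumn z)%:R <= _)%R).
    rewrite -sumn_nth natr_sum mulr_sumr; apply: ler_sum => j _.
    by rewrite mulrC; apply: t1.
  rewrite lerDr; apply: mulr_ge0 => //; apply: mulr_ge0 => //; exact: exprn_ge0.
rewrite mulr0 addr0.
apply: le_trans (_ : ((sumn z)%:R * ((sumn z)%:R * dl ^+ 2) <= _)%R).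
  rewrite {1}(_ : (sumn z)%:R = \sum_(j < size z) (Zcnt z j)%:R :> R)%R; last first.
    by rewrite -natr_sum sumn_nth.
  rewrite mulr_suml; apply: ler_sum => j _; exact: t2.
have h1 : ((sumn z)%:R <= K%:R :> R)%R by rewrite ler_nat leqNgt Kz.
have h2 : (0 <= dl ^+ 2)%R by apply: exprn_ge0.
have h3 : (0 <= (sumn z)%:R :> R)%R by [].
have : (0 <= (sumn z)%:R * dl ^+ 2 * (K%:R - (sumn z)%:R) :> R)%R.
  by apply: mulr_ge0; [apply: mulr_ge0|rewrite subr_ge0].
nra.
Qed.

Lemma part1 (e : R) : (0 < e)%R ->
  (forall e : R, (0 < e)%R -> exists K0 : nat, forall K, (K0 <= K)%N -> forall i,
      \esum_(z in [set z | (K < sumn z)%N]) (p i z * (sumn z)%:R)%:E <= e%:E * Mi p i) ->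
  (forall i, Mi p i < +oo) ->
  exists2 d : R, (0 < d)%R & forall s (dl : R), unit_cube s ->
     (forall j, 1 - s j <= dl)%R -> (dl < d)%R ->
     forall i, (`|eps2 p s i| <= e * dl)%R.
Proof.
move=> e0 tail Mfin.
have e20 : (0 < e / 2)%R by rewrite divr_gt0.
have [K HK] := tail _ e20; have {}HK := HK K (leqnn K).
have K1 : (0 < K%:R + 1 :> R)%R by rewrite ltr_wpDl.
exists (e / (2 * (K%:R + 1)))%R; first by rewrite divr_gt0 // mulr_gt0.
move=> s dl c hdl dld i.
have ad : forall j, (0 <= 1 - s j <= dl)%R.
  by move=> j; rewrite hdl andbT subr_ge0; case/andP: (c j).
have dl0 : (0 <= dl)%R by case/andP: (ad 0%N) => h1 h2; apply: le_trans h2.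
pose phi z := (\sum_(j < size z) ek (s j) (Zcnt z j))%R.
pose Af z := (\sum_(j < size z) (Zcnt z j)%:R * (1 - s j))%R.
pose Bf z := (\sum_(j < size z) (1 - s j ^+ Zcnt z j))%R.
have ABC : forall z, Af z = (Bf z + phi z)%R.
  move=> z; rewrite /Af /Bf /phi -big_split /=; apply: eq_bigr => j _; rewrite /ek; ring.
have B0 : forall z, (0 <= Bf z)%R.
  move=> z; apply: sumr_ge0 => j _; case/andP: (c j) => h1 h2.
  by rewrite subr_ge0 exprn_ile1.
have phi0 : forall z, (0 <= phi z)%R.
  by move=> z; apply: sumr_ge0 => j _; case/andP: (c j) => h1 h2; apply: ek_ge0.
have EA : \esum_(j in [set: nat]) (Mij p i j * (1 - s j)%:E) = Ex p i Af.
  by rewrite sumM // => j; case/andP: (ad j).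
have EB : \esum_(j in [set: nat]) (Qij p i j (s j))%:E = Ex p i Bf by rewrite sumQ.
have EAB : Ex p i Af = Ex p i Bf + Ex p i phi.
  rewrite -ExD //; apply: Ex_eq => z; by rewrite ABC.
have Mi0 := Mi_ge0 i.
have Mifin : Mi p i \is a fin_num by rewrite ge0_fin_numE.
set Mr := fine (Mi p i).
have MiE : Mi p i = Mr%:E by rewrite fineK.
have Mr0 : (0 <= Mr)%R by rewrite -lee_fin -MiE.
have Cle : Ex p i phi <= ((dl ^+ 2 * K%:R + dl * (e / 2)) * Mr)%:E.
  have H1 : Ex p i phi <= Ex p i (fun z => (dl ^+ 2 * K%:R * (sumn z)%:R +
      dl * (if (K < sumn z)%N then (sumn z)%:R else 0))%R).
    by apply: (Ex_le p0) => z; rewrite /phi; apply: phi_bd.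
  apply: le_trans H1 _.
  rewrite ExD //; first last.
  - by move=> z; apply: mulr_ge0 => //; case: ifP.
  - by move=> z; apply: mulr_ge0 => //; apply: mulr_ge0 => //; exact: exprn_ge0.
  rewrite ExZ //; last by apply: mulr_ge0 => //; exact: exprn_ge0.
  rewrite (ExZ p0 i dl0); last by move=> z; case: ifP.
  rewrite Ex_tail (_ : Ex p i (fun z => (sumn z)%:R)%R = Mi p i) //.
  rewrite mulrDl EFinD; apply: leeD.
    by rewrite MiE -EFinM.
  rewrite -mulrA EFinM; apply: lee_wpmul2l; first by rewrite lee_fin.
  by rewrite EFinM -MiE.
have Cge : 0 <= Ex p i phi by apply: (Ex_ge0 p0).
have Cfin : Ex p i phi \is a fin_num.
  by rewrite ge0_fin_numE //; apply: le_lt_trans Cle _; rewrite ltry.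
have Bge : 0 <= Ex p i Bf by apply: (Ex_ge0 p0).
have Bfin : Ex p i Bf \is a fin_num.
  rewrite ge0_fin_numE //; apply: le_lt_trans (Mfin i).
  rewrite /Mi -/(Ex p i (fun z => (sumn z)%:R)); apply: (Ex_le p0) => z.
  rewrite -sumn_nth natr_sum; apply: ler_sum => j _.
  case/andP: (c j) => h1 h2.
  have := ek_ge0 (Zcnt z j) h1 h2; rewrite /ek; have : (0 <= (Zcnt z j)%:R :> R)%R by [].
  nra.
rewrite /eps2 EA EB EAB -(fineK Cfin) -(fineK Bfin) -EFinD /= -/Mr.
rewrite addrAC subrr add0r.
set cc := fine (Ex p i phi).
have cc0 : (0 <= cc)%R by rewrite -lee_fin /cc fineK.
have ccle : (cc <= (dl ^+ 2 * K%:R + dl * (e / 2)) * Mr)%R by rewrite -lee_fin /cc fineK.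
have [->|Mrn0] := eqVneq Mr 0%R.
  by rewrite invr0 mulr0 normr0; apply: mulr_ge0 => //; apply: ltW.
have Mrp : (0 < Mr)%R by rewrite lt_def Mrn0 Mr0.
rewrite ger0_norm ?divr_ge0 // ler_pdivrMr //.
apply: le_trans ccle _.
apply: ler_wpM2r => //.
have dlK : (dl * K%:R <= e / 2)%R.
  have : (dl * (K%:R + 1) <= e / 2)%R.
    rewrite -ler_pdivlMr //; apply: ltW; apply: lt_le_trans dld _.
    by rewrite invfM mulrA.
  have : (0 <= dl)%R by []. nra.
have : (dl * (dl * K%:R) <= dl * (e / 2))%R by apply: ler_wpM2l.
rewrite expr2; nra.
Qed.

End GW1.

Section GW2.
Variable R : realType.
Variable p : nat -> seq nat -> R.
Hypothesis p0 : forall i z, (0 <= p i z)%R.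
Hypothesis p1 : forall i, (\esum_(z in [set: seq nat]) (p i z)%:E = 1)%E.

Local Open Scope ereal_scope.

Lemma pgf01 s i : unit_cube s -> (0 <= pgf p s i <= 1)%R.
Proof.
move=> c; have := pgf_Ex p0 p1 i c => E.
rewrite -!lee_fin E; apply/andP; split.
  by apply: (Ex_ge0 p0) => z; case/andP: (prodS01 z c).
by apply: (Ex_le1 p0 p1) => z; apply: prodS01.
Qed.

Lemma pgf_mono s s' i : unit_cube s -> unit_cube s' -> (forall j, s j <= s' j)%R ->
  (pgf p s i <= pgf p s' i)%R.
Proof.
move=> c c' le; rewrite -lee_fin (pgf_Ex p0 p1 i c) (pgf_Ex p0 p1 i c').
apply: (Ex_le p0) => z; exact: (@Pn_mono R (Zcnt z) s s' (size z) c le).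
Qed.

Lemma pgfn_cube n s : unit_cube s -> unit_cube (pgfn p n s).
Proof. by move=> c; elim: n => [|n IH] //= j; apply: pgf01. Qed.

Lemma pgfn_mono n s s' : unit_cube s -> unit_cube s' -> (forall j, s j <= s' j)%R ->
  forall j, (pgfn p n s j <= pgfn p n s' j)%R.
Proof.
move=> c c' le; elim: n => [|n IH] //= j.
by apply: pgf_mono => //; apply: pgfn_cube.
Qed.

Definition zerov : nat -> R := fun _ => 0%R.

Lemma zerov_cube : unit_cube zerov.
Proof. by move=> j; rewrite /zerov lexx ler01. Qed.

Lemma pgfn0_incr n j : (pgfn p n zerov j <= pgfn p n.+1 zerov j)%R.
Proof.
elim: n j => [|n IH] j.
  by rewrite /=; case/andP: (pgf01 j zerov_cube).
rewrite [pgfn p n.+2 _]/= [pgfn p n.+1 _]/=.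
apply: pgf_mono; [exact: (pgfn_cube n zerov_cube) | exact: (pgfn_cube n.+1 zerov_cube) | exact: IH].
Qed.

Lemma pgfn0_incr_le m n j : (m <= n)%N -> (pgfn p m zerov j <= pgfn p n zerov j)%R.
Proof.
move=> /subnK <-; elim: (n - m)%N => [|k IH]; first by rewrite add0n.
by apply: le_trans IH _; rewrite addSn; apply: pgfn0_incr.
Qed.

Lemma step_le t i : unit_cube t ->
  (1 - pgf p t i)%:E <= \esum_(j in [set: nat]) (Mij p i j * (1 - t j)%:E).
Proof.
move=> c; rewrite (sumM p0); last by move=> j; case/andP: (c j); rewrite subr_ge0.
rewrite /pgf -/(Ex p i ((fun z => prodS z t))) -(Ex_compl p0 p1); last by move=> z; apply: prodS01.
apply: (Ex_le p0) => z.
have := @En_ge0 R (Zcnt z) t (size z) c.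
rewrite /En /Pn /Sn /prodS. lra.
Qed.

Lemma Mi_bounded :
  (forall e : R, (0 < e)%R -> exists K0 : nat, forall K, (K0 <= K)%N -> forall i,
      \esum_(z in [set z | (K < sumn z)%N]) (p i z * (sumn z)%:R)%:E <= e%:E * Mi p i) ->
  (forall i, Mi p i < +oo) ->
  exists2 B : R, (0 <= B)%R & forall i, Mi p i <= B%:E.
Proof.
move=> tail Mfin.
have [K HK] := tail (1/2)%R ltac:(by rewrite divr_gt0).
have {}HK := HK K (leqnn K).
exists (2 * K%:R)%R; first by rewrite mulr_ge0.
move=> i.
have Mi0 := Mi_ge0 p0 i.
have Mifin : Mi p i \is a fin_num by rewrite ge0_fin_numE.
have H : Mi p i <= K%:R%:E + (1/2)%:E * Mi p i.
  apply: le_trans (_ : Ex p i (fun z => K%:R + (if (K < sumn z)%N then (sumn z)%:R else 0))%R <= _).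
    apply: (Ex_le p0) => z; case: ifP => Kz.
      by rewrite lerDr.
    by rewrite addr0 ler_nat leqNgt Kz.
  rewrite (ExD p0) //; last by move=> z; case: ifP.
  rewrite (Ex_cst p0 p1) // Ex_tail; apply: leeD => //.
move: H; rewrite -(fineK Mifin) -EFinM -EFinD !lee_fin => H; lra.
Qed.

Lemma tail_bound i (a : nat -> R) (eta e' : R) (N1 : nat) :
  (0 <= eta)%R -> (0 <= e')%R -> (forall j, 0 <= a j <= 1)%R -> (forall j, (j <= N1)%N -> a j <= eta)%R ->
  \esum_(j in [set j | (N1 < j)%N]) Mij p i j <= e'%:E * Mi p i ->
  \esum_(j in [set: nat]) (Mij p i j * (a j)%:E) <= (eta + e')%:E * Mi p i.
Proof.
move=> eta0 e0 a01 aeta T.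
have M0 : forall j, 0 <= Mij p i j by move=> j; apply: (Ex_ge0 p0).
apply: le_trans (_ : \esum_(j in [set: nat]) (Mij p i j * eta%:E +
    (if j \in [set j | (N1 < j)%N] then Mij p i j else 0)) <= _).
  apply: le_esum => j _; case: (boolP (j \in _)) => H.
    apply: le_trans (_ : Mij p i j * 1%:E <= _).
      by apply: lee_wpmul2l => //; rewrite lee_fin; case/andP: (a01 j).
    by rewrite mule1 leeDr // mule_ge0 // lee_fin.
  rewrite adde0; apply: lee_wpmul2l => //; rewrite lee_fin; apply: aeta.
  by rewrite leqNgt; apply/negP => h; move: H; rewrite mem_set.
rewrite esumD; first last.
- by move=> j _; case: ifP.
- by move=> j _; rewrite mule_ge0 // lee_fin.
rewrite -esum_mkcond esumZr // -Mi_sum // EFinD ge0_muleDl ?lee_fin //.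
rewrite muleC; apply: leeD => //.
Qed.

Lemma UE :
  (forall e : R, (0 < e)%R -> exists N0 : nat, forall N, (N0 <= N)%N -> forall i,
      (\esum_(j in [set j | (N < j)%N]) Mij p i j <= e%:E * Mi p i)%E) ->
  (forall e : R, (0 < e)%R -> exists K0 : nat, forall K, (K0 <= K)%N -> forall i,
      \esum_(z in [set z | (K < sumn z)%N]) (p i z * (sumn z)%:R)%:E <= e%:E * Mi p i) ->
  (forall i, Mi p i < +oo) ->
  (forall j (eta : R), (0 < eta)%R -> exists n, (1 - pgfn p n zerov j <= eta)%R) ->
  forall eta : R, (0 < eta)%R -> exists N, forall n, (N <= n)%N ->
    forall s, unit_cube s -> forall i, (1 - pgfn p n s i <= eta)%R.
Proof.
move=> tail1 tail2 Mfin PE eta eta0.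
have [B B0 HB] := Mi_bounded tail2 Mfin.
have B1 : (0 < B + 1)%R by rewrite ltr_wpDl.
pose e' := (eta / (2 * (B + 1)))%R.
have e'0 : (0 < e')%R by rewrite divr_gt0 // mulr_gt0.
have [N1 HN1] := tail1 e' e'0; have {}HN1 := HN1 N1 (leqnn _).
have fin : forall m, exists n0, forall n, (n0 <= n)%N -> forall j, (j < m)%N ->
    (1 - pgfn p n zerov j <= e')%R.
  elim => [|m [n0 H]]; first by exists 0%N.
  have [n1 Hn1] := PE m e' e'0.
  exists (maxn n0 n1) => n nn j; rewrite ltnS leq_eqVlt => /orP[/eqP ->|jm].
    apply: le_trans _ Hn1.
    have := pgfn0_incr_le m (leq_trans (leq_maxr n0 n1) nn); lra.
  by apply: H => //; exact: leq_trans (leq_maxl _ _) nn.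
have [n0 Hn0] := fin N1.+1.
exists n0.+1 => n nn s c i.
case: n nn => [//|n] nn.
rewrite [pgfn p n.+1 s]/=.
set t := pgfn p n s.
have ct : unit_cube t by apply: pgfn_cube.
have H1 := step_le i ct.
have H2 : \esum_(j in [set: nat]) (Mij p i j * (1 - t j)%:E) <= (e' + e')%:E * Mi p i.
  apply: tail_bound; [exact: ltW | exact: ltW | | | exact: HN1].
  - by move=> j; case/andP: (ct j) => h1 h2; apply/andP; split; lra.
  - move=> j jN; apply: le_trans (Hn0 n nn j jN).
    have := pgfn_mono n zerov_cube c (fun j => proj1 (andP (c j))) j; rewrite /t; lra.
have H3 : (e' + e')%:E * Mi p i <= (e' + e')%:E * B%:E.
  by apply: lee_wpmul2l => //; rewrite lee_fin; apply: addr_ge0; apply: ltW.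
have := le_trans H1 (le_trans H2 H3); rewrite -EFinM lee_fin => H.
apply: le_trans H _.
rewrite /e'.
have -> : ((eta / (2 * (B + 1)) + eta / (2 * (B + 1))) * B = eta * (B / (B + 1)))%R.
  field; rewrite gt_eqF //.
have h : (B / (B + 1) <= 1)%R by rewrite ler_pdivrMr // mul1r; lra.
have := ltW eta0; nra.
Qed.

End GW2.

Section GW3.
Variable R : realType.
Variable p : nat -> seq nat -> R.
Hypothesis p0 : forall i z, (0 <= p i z)%R.
Hypothesis p1 : forall i, (\esum_(z in [set: seq nat]) (p i z)%:E = 1)%E.

Local Open Scope ereal_scope.

Definition Qz n j : R := (1 - pgfn p n (zerov R) j)%R.
Definition qq j : R := inf [set Qz n j | n in [set: nat]].

Lemma Qz01 n j : (0 <= Qz n j <= 1)%R.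
Proof.
rewrite /Qz; case/andP: (pgfn_cube p0 p1 n (@zerov_cube R) j) => h1 h2.
apply/andP; split; lra.
Qed.

Lemma qq_le n j : (qq j <= Qz n j)%R.
Proof.
apply: ge_inf; last by exists n.
by exists 0%R => _ [m _ <-]; case/andP: (Qz01 m j).
Qed.

Lemma qq_ge j (c : R) : (forall n, c <= Qz n j)%R -> (c <= qq j)%R.
Proof. by move=> H; apply: lb_le_inf; [exists (Qz 0 j), 0%N|move=> _ [n _ <-]]. Qed.

Lemma qq01 j : (0 <= qq j <= 1)%R.
Proof.
apply/andP; split; first by apply: qq_ge => n; case/andP: (Qz01 n j).
by apply: le_trans (qq_le 0 j) _; case/andP: (Qz01 0 j).
Qed.

Lemma mule_gt0_inv (x y : \bar R) : 0 <= x -> 0 <= y -> 0 < x * y -> 0 < x /\ 0 < y.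
Proof.
move=> x0 y0 H; split; rewrite lt_def ?x0 ?y0 andbT; apply/negP => /eqP E;
  by move: H; rewrite E ?mul0e ?mule0 ltxx.
Qed.

Lemma stepA k j : 0 < Mij p k j -> (0 < qq j)%R -> (0 < qq k)%R.
Proof.
move=> Mkj qj.
have [z _ Hz] : exists2 z, [set: seq nat] z & 0 < (p k z * (Zcnt z j)%:R)%:E.
  by apply: esum_gt0 => // z; rewrite lee_fin mulr_ge0.
rewrite lte_fin in Hz.
have pz : (0 < p k z)%R.
  have := p0 k z; rewrite le_eqVlt => /orP[/eqP E|//].
  by rewrite -E mul0r ltxx in Hz.
have zj : (1 <= Zcnt z j)%N.
  by rewrite lt0n; apply/negP => /eqP E; rewrite E mulr0 ltxx in Hz.
have jz : (j < size z)%N.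
  by rewrite ltnNge; apply/negP => H; rewrite /Zcnt nth_default in zj.
have pz1 : (p k z <= 1)%R.
  have := Ex_single p0 k (f := fun _ => 1%R) z (fun _ => ler01).
  by rewrite (Ex_cst p0 p1) // mulr1 lee_fin.
have key : forall n, (p k z * qq j <= Qz n k)%R.
  case => [|m].
    rewrite /Qz /= /zerov subr0; case/andP: (qq01 j) => h1 h2.
    have := ltW pz; nra.
  rewrite /Qz [pgfn p m.+1 _]/=; set t := pgfn p m (zerov R).
  have ct : unit_cube t by apply: (pgfn_cube p0 p1); exact: zerov_cube.
  have E : (1 - pgf p t k)%:E = Ex p k (fun z => 1 - prodS z t)%R.
    by rewrite /pgf -/(Ex p k (fun z => prodS z t)) -(Ex_compl p0 p1) // => y; apply: prodS01.
  have S := Ex_single p0 k (f := fun z => 1 - prodS z t)%R z.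
  rewrite -E lee_fin in S; have {}S := S (fun y => ltac:(case/andP: (prodS01 y ct) => _ h; lra)).
  have F := prod_le_factor ct jz zj.
  have Q := qq_le m j; rewrite /Qz -/t in Q.
  apply: le_trans S; apply: ler_wpM2l; first exact: ltW.
  rewrite /prodS /Zcnt; lra.
apply: lt_le_trans (qq_ge key); exact: mulr_gt0.
Qed.

Lemma Mij_ge0 i j : 0 <= Mij p i j.
Proof. by apply: esum_ge0 => z _; rewrite lee_fin mulr_ge0. Qed.

Lemma Mn_ge0 n i j : 0 <= Mn p n i j.
Proof.
elim: n j => [|n IH] j /=; first by rewrite lee_fin.
by apply: esum_ge0 => k _; rewrite mule_ge0 // Mij_ge0.
Qed.

Lemma stepB n i j : 0 < Mn p n i j -> (0 < qq j)%R -> (0 < qq i)%R.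
Proof.
elim: n j => [|n IH] j /=.
  by case: eqP => [->//|_]; rewrite ltxx.
move=> H qj.
have [k _ Hk] : exists2 k, [set: nat] k & 0 < Mn p n i k * Mij p k j.
  by apply: esum_gt0 => // k; rewrite mule_ge0 // ?Mn_ge0 ?Mij_ge0.
have [h1 h2] := mule_gt0_inv (Mn_ge0 n i k) (Mij_ge0 k j) Hk.
apply: (IH k h1); exact: stepA h2 qj.
Qed.

Definition Dz i s := Ex p i (fun z => En (Zcnt z) s (size z)).

Lemma Dz_ge0 i s : unit_cube s -> 0 <= Dz i s.
Proof. by move=> c; apply: (Ex_ge0 p0) => z; apply: En_ge0. Qed.

Lemma ID s i : unit_cube s ->
  (1 - pgf p s i)%:E + Dz i s = \esum_(j in [set: nat]) (Mij p i j * (1 - s j)%:E).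
Proof.
move=> c; rewrite (sumM p0); last by move=> j; case/andP: (c j); rewrite subr_ge0.
rewrite /pgf -/(Ex p i (fun z => prodS z s)) -(Ex_compl p0 p1); last by move=> z; apply: prodS01.
rewrite /Dz -(ExD p0); first last.
- by move=> z; apply: En_ge0.
- by move=> z; case/andP: (prodS01 z c) => _ h; rewrite subr_ge0.
by apply: Ex_eq => z; congr (_ * _)%R; rewrite /En /Pn /Sn /prodS; ring.
Qed.

Variable v : nat -> R.
Hypothesis vpos : forall j, (0 < v j)%R.
Hypothesis veig : forall j, \esum_(i in [set: nat]) ((v i)%:E * Mij p i j) = (v j)%:E.
Hypothesis vsum : \esum_(j in [set: nat]) (v j)%:E = 1.

Definition W (s : nat -> R) := \esum_(i in [set: nat]) ((v i)%:E * (1 - s i)%:E).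

Lemma W_ge0 s : unit_cube s -> 0 <= W s.
Proof.
move=> c; apply: esum_ge0 => i _; case/andP: (c i) => _ h.
by rewrite -EFinM lee_fin mulr_ge0 // ?subr_ge0 // ltW.
Qed.

Lemma WD s : unit_cube s ->
  W (fun j => pgf p s j) + \esum_(i in [set: nat]) ((v i)%:E * Dz i s) = W s.
Proof.
move=> c.
have a0 : forall j, (0 <= 1 - s j)%R by move=> j; case/andP: (c j); rewrite subr_ge0.
have b0 : forall i, (0 <= 1 - pgf p s i)%R.
  by move=> i; case/andP: (pgf01 p0 p1 i c); rewrite subr_ge0.
have v0 : forall i, 0 <= (v i)%:E by move=> i; rewrite lee_fin ltW.
rewrite /W -esumD; first last.
- by move=> i _; apply: mule_ge0; [exact: v0 | exact: Dz_ge0].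
- by move=> i _; apply: mule_ge0; [exact: v0 | rewrite lee_fin].
rewrite (eq_esum (b := fun i => \esum_(j in [set: nat])
   ((v i)%:E * (Mij p i j * (1 - s j)%:E)))); last first.
  move=> i _; rewrite -ge0_muleDr; [|by rewrite lee_fin|exact: Dz_ge0].
  rewrite ID // esumZl ?ltW // => j; apply: mule_ge0; [exact: Mij_ge0|by rewrite lee_fin].
rewrite esum_swap; last first.
  by move=> i j; apply: mule_ge0 => //; apply: mule_ge0; [exact: Mij_ge0|by rewrite lee_fin].
apply: eq_esum => j _.
rewrite (eq_esum (b := fun i => ((v i)%:E * Mij p i j) * (1 - s j)%:E)); last first.
  by move=> i _; rewrite muleA.
rewrite esumZr ?veig //.
by move=> i; apply: mule_ge0 => //; exact: Mij_ge0.
Qed.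

Lemma D_zero : (forall i, 0 < qq i)%R -> forall i z, (0 < p i z)%R ->
  En (Zcnt z) (fun j => 1 - qq j)%R (size z) = 0%R.
Proof.
move=> qpos.
pose q' := fun j => (1 - qq j)%R.
have cq : unit_cube q'.
  by move=> j; rewrite /q'; case/andP: (qq01 j) => h1 h2; apply/andP; split; lra.
pose tn := fun n => pgfn p n (zerov R).
have ctn : forall n, unit_cube (tn n).
  by move=> n; apply: (pgfn_cube p0 p1); exact: zerov_cube.
have le_tq : forall n j, (tn n j <= q' j)%R.
  by move=> n j; have := qq_le n j; rewrite /Qz /q' /tn; lra.
pose Xs := \esum_(i in [set: nat]) ((v i)%:E * Dz i q').
have v0 : forall i, 0 <= (v i)%:E by move=> i; rewrite lee_fin ltW.
have Xs0 : 0 <= Xs.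
  by apply: esum_ge0 => i _; apply: mule_ge0 => //; exact: Dz_ge0.
have XnXs : forall n, Xs <= \esum_(i in [set: nat]) ((v i)%:E * Dz i (tn n)).
  move=> n; apply: le_esum => i _; apply: lee_wpmul2l => //.
  apply: (Ex_le p0) => z; exact: En_mono (ctn n) cq (le_tq n).
have Wz : W (tn 0%N) = 1.
  rewrite /W /tn /= /zerov -vsum; apply: eq_esum => i _; by rewrite subr0 mule1.
have tele : forall N : nat, W (tn N) + (N%:R)%:E * Xs <= 1.
  elim => [|N IH]; first by rewrite mul0e adde0 Wz.
  have E := WD (ctn N).
  change (W (tn N.+1) + (N.+1%:R)%:E * Xs <= 1).
  have E' : W (tn N.+1) + \esum_(i in [set: nat]) ((v i)%:E * Dz i (tn N)) = W (tn N) by [].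
  rewrite -natr1 EFinD ge0_muleDl // ?lee_fin // mul1e.
  apply: le_trans IH; rewrite addeCA addeA -E'.
  set a := (N%:R)%:E * Xs; set w := W (tn N.+1).
  rewrite [a + w]addeC -addeA [a + Xs]addeC addeA.
  by apply: leeD => //; apply: leeD => //.
have Xs_eq0 : Xs = 0.
  suff H : forall X : \bar R, 0 <= X ->
      (forall N : nat, W (tn N) + (N%:R)%:E * X <= 1) -> X = 0 by exact: H.
  case => [x| |] //.
    rewrite lee_fin => x0 tele2; apply/eqP; rewrite eqe eq_le x0 andbT.
    rewrite leNgt; apply/negP => xpos.
    have := tele2 (Num.truncn x^-1).+1.
    have Wge := W_ge0 (ctn (Num.truncn x^-1).+1).
    have := truncnS_gt x^-1.
    set N := ((Num.truncn x^-1).+1)%:R => HN.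
    set w := W _ in Wge * => H.
    have : (N%:E * x%:E <= 1).
      apply: le_trans H; rewrite leeDr //.
    rewrite -EFinM lee_fin => Nx.
    have : (1 < N * x)%R by rewrite -ltr_pdivrMr // div1r.
    lra.
  move=> _ tele2; have := tele2 1%N; rewrite mul1e addey; first by [].
  by rewrite gt_eqF // (lt_le_trans _ (W_ge0 (ctn 1%N))) // ltNye.
move=> i z pz.
have H1 : (v i)%:E * Dz i q' <= 0.
  rewrite -Xs_eq0; apply: (@esum_single R nat (fun k => (v k)%:E * Dz k q') i) => k.
  by apply: mule_ge0 => //; exact: Dz_ge0.
rewrite pmule_rle0 ?lte_fin // in H1.
have H2 := Ex_single p0 i (f := fun z => En (Zcnt z) q' (size z)) z (fun z => En_ge0 _ _ cq).
have H3 := le_trans H2 H1; rewrite lee_fin in H3.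
have H4 : (0 <= En (Zcnt z) q' (size z))%R by apply: En_ge0.
apply/eqP; rewrite eq_le H4 andbT.
by rewrite -(pmulr_rle0 _ pz).
Qed.

Lemma supp_le1 : (forall i, 0 < qq i)%R -> forall i z, (0 < p i z)%R -> (sumn z <= 1)%N.
Proof.
move=> qpos i z pz.
have := D_zero qpos pz => /En_eq0; rewrite sumn_nth; apply.
move=> j; case/andP: (qq01 j) => h1 h2; have := qpos j => h3; apply/andP; split; lra.
Qed.

Lemma supp_eq1 : (forall i z, (0 < p i z)%R -> (sumn z <= 1)%N) ->
  forall i z, (0 < p i z)%R -> sumn z = 1%N.
Proof.
move=> Hle.
pose r i := Ex p i (fun z => ((sumn z == 0%N)%:R)%R).
have v0 : forall i, 0 <= (v i)%:E by move=> i; rewrite lee_fin ltW.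
have r0 : forall i, 0 <= r i by move=> i; apply: (Ex_ge0 p0).
have MR : forall i, Mi p i + r i = 1.
  move=> i; rewrite (_ : Mi p i = Ex p i (fun z => (sumn z)%:R)%R) // /r -(ExD p0) //.
  rewrite -(Ex_cst p0 p1 i ler01); apply: Ex_eq => z.
  have := p0 i z; rewrite le_eqVlt => /orP[/eqP <-|pz]; first by rewrite !mul0r.
  have := Hle i z pz; case: (sumn z) => [|[|//]] _ /=; by rewrite ?addr0 ?add0r.
have vM : \esum_(i in [set: nat]) ((v i)%:E * Mi p i) = 1.
  rewrite (eq_esum (b := fun i => \esum_(j in [set: nat]) ((v i)%:E * Mij p i j))); last first.
    by move=> i _; rewrite Mi_sum // esumZl ?ltW // => j; exact: Mij_ge0.
  rewrite esum_swap; last by move=> i j; apply: mule_ge0 => //; exact: Mij_ge0.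
  by rewrite (eq_esum (b := fun j => (v j)%:E)) // => j _; rewrite veig.
have vMR : \esum_(i in [set: nat]) ((v i)%:E * Mi p i) +
    \esum_(i in [set: nat]) ((v i)%:E * r i) = 1.
  rewrite -esumD; first last.
  - by move=> i _; apply: mule_ge0.
  - by move=> i _; apply: mule_ge0 => //; exact: Mi_ge0.
  rewrite -vsum; apply: eq_esum => i _.
  by rewrite -ge0_muleDr ?MR ?mule1 // Mi_ge0.
rewrite vM in vMR.
have S0 : \esum_(i in [set: nat]) ((v i)%:E * r i) = 0.
  move: vMR; have : 0 <= \esum_(i in [set: nat]) ((v i)%:E * r i).
    by apply: esum_ge0 => i _; apply: mule_ge0.
  case: (\esum_(i in _) _) => [x| |] //=.
  by move=> _ /eqP; rewrite -EFinD eqe => /eqP h; congr (_%:E); lra.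
move=> i z pz; have := Hle i z pz.
case E: (sumn z) => [|[|//]] _ //; exfalso.
have H1 : (v i)%:E * r i <= 0.
  rewrite -S0; apply: (@esum_single R nat (fun k => (v k)%:E * r k) i) => k.
  by apply: mule_ge0.
rewrite pmule_rle0 ?lte_fin // in H1.
have H2 := Ex_single p0 i (f := fun z => ((sumn z == 0%N)%:R)%R) z (fun _ => ler0n _ _).
have := le_trans H2 H1; rewrite E /= mulr1 lee_fin; lra.
Qed.

Lemma linear_of : (forall i z, (0 < p i z)%R -> sumn z = 1%N) -> pgf_linear p.
Proof.
move=> H i s c; rewrite (sumM p0); last by move=> j; case/andP: (c j).
rewrite /pgf; congr fine; apply: Ex_eq => z.
have := p0 i z; rewrite le_eqVlt => /orP[/eqP <-|pz]; first by rewrite !mul0r.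
by rewrite prod_lin //; exact: (H i z pz).
Qed.

Lemma PE : irreducible p -> ~ pgf_linear p ->
  forall j (eta : R), (0 < eta)%R -> exists n, (1 - pgfn p n (zerov R) j <= eta)%R.
Proof.
move=> irr nonlin j eta eta0; apply: contrapT => Hn.
have H : forall n, (eta <= Qz n j)%R.
  move=> n; rewrite leNgt; apply/negP => h; apply: Hn; exists n; exact: ltW.
have qj : (0 < qq j)%R by apply: lt_le_trans eta0 (qq_ge H).
have qpos : forall i, (0 < qq i)%R.
  by move=> i; have [n [_ Hn']] := irr i j; exact: stepB Hn' qj.
by apply: nonlin; apply: linear_of; apply: supp_eq1; apply: supp_le1.
Qed.

End GW3.

Unset Implicit Arguments. Set Strict Implicit. Set Printing Implicit Defensive.

Theorem lemma7 (R : realType) (p : nat -> seq nat -> R) :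
  offspring_law p -> classM1 p -> ~ pgf_linear p ->
  (* lim_{s in S, ||1-s|| -> 0} sup_i |eps_{2,i}(1-s)| / ||1-s|| = 0 *)
  (forall e : R, 0 < e -> exists2 d : R, 0 < d &
     forall s, Sset s -> normInf s < d ->
       forall i, `|eps2 p s i| <= e * normInf s) /\
  (* lim_n sup_{s in S, i} |eps_{2,i}(Q(n-1;s))| / Qcal(n-1;s) = 0 *)
  (forall e : R, 0 < e -> exists N : nat, forall n, (N <= n)%N ->
     forall s, Sset s ->
       forall i, `|eps2 p (pgfn p n.-1 s) i| <= e * Qsup p n.-1 s).
Proof.
move=> [p0 p1] [Mfin [irr [_ [_ [_ [_ [[v [u [vpos [_ [veig [_ [_ [vsum _]]]]]]]] [tail1 tail2]]]]]]]] nonlin.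
split.
- move=> e e0; have [d d0 H] := part1 p0 p1 e0 tail2 Mfin.
  exists d => // s [c _] sd i; apply: H => // j.
  apply: ub_le_sup; last by exists j.
  exists 1 => _ [k _ <-]; case/andP: (c k) => h1 h2; lra.
- move=> e e0; have [d d0 H] := part1 p0 p1 e0 tail2 Mfin.
  have d20 : 0 < d / 2 by rewrite divr_gt0.
  have [N HN] := UE p0 p1 tail1 tail2 Mfin (PE p0 p1 vpos veig vsum irr nonlin) d20.
  exists N.+1 => n nn s [c _] i.
  have ct := pgfn_cube p0 p1 n.-1 c.
  have nN : (N <= n.-1)%N by move: nn; case: (n).
  have ub : forall j, 1 - pgfn p n.-1 s j <= Qsup p n.-1 s.
    move=> j; apply: ub_le_sup; last by exists j.
    by exists 1 => _ [k _ <-]; rewrite /Qn; case/andP: (ct k) => h1 h2; lra.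
  apply: H => //.
  apply: le_lt_trans (_ : d / 2 < d); last by lra.
  apply: ge_sup; first by exists (Qn p n.-1 s 0%N), 0%N.
  move=> _ [k _ <-]; exact: HN.
Qed.
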